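(* Let $R$ be a commutative ring such that there exists a derivation $\partial\in\mathrm{Der}(R)$ with $r\partial\neq0$ for all nonzero $r\in R$. Then the group homomorphism $\mathrm{Aut}(R)\to\mathrm{Aut}_{\mathrm{Lie}}(\mathrm{Der}(R))$, $\sigma\mapsto(\delta\mapsto\sigma\delta\sigma^{-1})$, is a monomorphism.
   Context: $\mathrm{Aut}(R)$ is the group of ring automorphisms of $R$, $\mathrm{Der}(R)$ is the Lie algebra of derivations of $R$ with bracket $[\delta,\delta']=\delta\delta'-\delta'\delta$, and $r\partial$ denotes the derivation $a\mapsto r\partial(a)$. *)

(* Defs.v *)
From mathcomp Require Import all_boot all_algebra.
Set Implicit Arguments. Unset Strict Implicit. Unset Printing Implicit Defensive.
Import GRing.Theory.
Local Open Scope ring_scope.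

Definition is_derivation (R : comPzRingType) (d : R -> R) : Prop :=
  (forall a b : R, d (a + b) = d a + d b) /\
  (forall a b : R, d (a * b) = a * d b + d a * b).

Definition is_ring_aut (R : comPzRingType) (s : R -> R) : Prop :=
  [/\ forall a b : R, s (a + b) = s a + s b,
      forall a b : R, s (a * b) = s a * s b,
      s 1 = 1
    & bijective s].

(* Main.v *)
Require Import Defs.
From mathcomp Require Import all_boot all_algebra.
From mathcomp Require Import ring.
Local Open Scope ring_scope.
Import GRing.Theory.

Theorem lemma2p2 (R : comPzRingType)
  (Hpart : exists d : R -> R, is_derivation d /\
             forall r : R, r != 0 -> ~ (forall a : R, r * d a = 0))
  (s1 t1 s2 t2 : R -> R)
  (Hs1 : is_ring_aut s1) (Hs1K : cancel s1 t1) (Ht1K : cancel t1 s1)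
  (Hs2 : is_ring_aut s2) (Hs2K : cancel s2 t2) (Ht2K : cancel t2 s2)
  (Hconj : forall delta : R -> R, is_derivation delta ->
             (fun a => s1 (delta (t1 a))) =1 (fun a => s2 (delta (t2 a)))) :
  s1 =1 s2.
Proof.
case: Hpart => d [[dD dM] dnz].
case: Hs1 => s1D s1M s11 _; case: Hs2 => s2D s2M s21 _.
have t2M : forall x y, t2 (x * y) = t2 x * t2 y.
  move=> x y; apply: (can_inj Hs2K); by rewrite s2M !Ht2K.
pose tau := fun x => t2 (s1 x).
have tauM : forall x y, tau (x * y) = tau x * tau y by move=> x y; rewrite /tau s1M t2M.
have comm : forall delta, is_derivation delta -> forall b, tau (delta b) = delta (tau b).
  move=> delta Hd b; have := Hconj delta Hd (s1 b); rewrite /= Hs1K /tau => ->.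
  by rewrite Hs2K.
have surj : forall c, tau (t1 (s2 c)) = c by move=> c; rewrite /tau Ht1K Hs2K.
have Hder : forall r, is_derivation (fun a => r * d a).
  move=> r; split=> a b; first by rewrite dD mulrDr.
  rewrite dM; ring.
move=> r.
have taur : tau r = r.
  apply/eqP; rewrite -subr_eq0; apply/negPn/negP => Hne.
  apply: (dnz _ Hne) => c.
  rewrite -(surj c); set b := t1 (s2 c).
  have h1 := comm _ (Hder r) b.
  rewrite tauM (comm _ (conj dD dM)) in h1.
  by rewrite mulrBl h1 subrr.
by rewrite -[in RHS]taur /tau Ht2K.
Qed.
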